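(* Let $n$ be a positive integer and $x\in\Gamma_n$. Then every vertex $v$ of the BPSP graph $G_x$ satisfies $\deg_{G_x}(v)\le 4$.
   Context: Let $[n]=\{1,\dots,n\}$. $\Gamma_n$ is the set of words $x=(x_1,\dots,x_{2n})\in[n]^{2n}$ in which every symbol of $[n]$ occurs exactly twice. $[\,\cdot\,]$ is the Iverson bracket. For $i\in[2n-1]$, $\eta(x,i)=[x_{i+1}\in\{x_1,\dots,x_i\}]\oplus[x_i\in\{x_1,\dots,x_{i-1}\}]$. For $e\subseteq[n]$, $\theta_x(e)=-\sum_{i=1}^{2n-1}(-1)^{\eta(x,i)}\delta_{e,\{x_i,x_{i+1}\}}$. The BPSP graph $G_x=(V_x,E_x,W_x)$ has $V_x=[n]$, $E_x=\{\{x_i,x_{i+1}\}: i\in[2n-1],\ x_i\neq x_{i+1},\ \theta_x(\{x_i,x_{i+1}\})\neq0\}$, $W_x=\theta_x|_{E_x}$. $\deg_G(v)=|\{u\in V:\{u,v\}\in E\}|$. *)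

(* Defs.v *)
From mathcomp Require Import all_boot all_order all_algebra.
Set Implicit Arguments. Unset Strict Implicit. Unset Printing Implicit Defensive.
Import GRing.Theory Num.Theory.

(* Symbols [n] = {1,...,n} are represented by 'I_n = {0,...,n-1};
   a word x = (x_1,...,x_{2n}) is a sequence of symbols. *)

Definition Gamma (n : nat) (x : seq 'I_n) : bool :=
  (size x == 2 * n) && [forall a : 'I_n, count_mem a x == 2].

(* The steps i = 1..2n-1 of the word, encoded 0-based as j = i-1 together
   with the consecutive pair (x_i, x_{i+1}). *)
Definition steps (n : nat) (x : seq 'I_n) : seq (nat * ('I_n * 'I_n)) :=
  zip (iota 0 (size x).-1) (zip x (behead x)).

(* eta(x,i) = [x_{i+1} in {x_1..x_i}] xor [x_i in {x_1..x_{i-1}}],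
   with j = i - 1:  {x_1..x_i} = take (j+1) x, {x_1..x_{i-1}} = take j x. *)
Definition eta (n : nat) (x : seq 'I_n) (s : nat * ('I_n * 'I_n)) : bool :=
  (s.2.2 \in take s.1.+1 x) (+) (s.2.1 \in take s.1 x).

Definition theta (n : nat) (x : seq 'I_n) (e : {set 'I_n}) : int :=
  (- \sum_(s <- steps x) (-1) ^+ eta x s * (e == [set s.2.1; s.2.2])%:R)%R.

Definition BPSP_edges (n : nat) (x : seq 'I_n) : {set {set 'I_n}} :=
  [set e : {set 'I_n} | has (fun s => [&& e == [set s.2.1; s.2.2],
                                          s.2.1 != s.2.2 &
                                          theta x [set s.2.1; s.2.2] != 0%R])
                            (steps x)].

Definition BPSP_weight (n : nat) (x : seq 'I_n) (e : {set 'I_n}) : int := theta x e.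

Definition deg (n : nat) (E : {set {set 'I_n}}) (v : 'I_n) : nat :=
  #|[set u : 'I_n | [set u; v] \in E]|.

(* Main.v *)
Require Import Defs.
From mathcomp Require Import all_boot all_order all_algebra.

Lemma mem_zip2 (S T : eqType) (s : seq S) (t : seq T) p :
  p \in zip s t -> p.2 \in t.
Proof.
elim: s t => [|a s IH] [|b t] //=; rewrite inE => /orP [/eqP -> | /IH].
  by rewrite /= eqxx.
by move=> ->; rewrite orbT.
Qed.

Lemma count_zip1 (S T : eqType) (s : seq S) (t : seq T) v :
  count (fun p => p.1 == v) (zip s t) <= count_mem v s.
Proof.
elim: s t => [|a s IH] [|b t] //=.
by rewrite eq_sym leq_add2l.
Qed.

Lemma count_zip2 (S T : eqType) (s : seq S) (t : seq T) v :
  count (fun p => p.2 == v) (zip s t) <= count_mem v t.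
Proof.
elim: s t => [|a s IH] [|b t] //=.
by rewrite eq_sym leq_add2l.
Qed.

Lemma count_behead (T : eqType) (s : seq T) v :
  count_mem v (behead s) <= count_mem v s.
Proof. by case: s => //= a s; rewrite leq_addl. Qed.

Theorem proposition5 (n : nat) (x : seq 'I_n) :
  0 < n -> Gamma x -> forall v : 'I_n, deg (BPSP_edges x) v <= 4.
Proof.
move=> _ /andP [_ /forallP Hc] v.
have cv : count_mem v x = 2 by apply/eqP; exact: Hc.
set z := zip x (behead x).
set L := [seq p.1 | p <- z & p.2 == v] ++ [seq p.2 | p <- z & p.1 == v].
rewrite /deg.
apply: (@leq_trans #|L|).
  apply: subset_leq_card; apply/subsetP => u; rewrite inE /BPSP_edges inE.
  case/hasP => s /mem_zip2 Hs /and3P [/eqP E ab _].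
  have vi : v \in [set s.2.1; s.2.2] by rewrite -E !inE eqxx orbT.
  have ui : u \in [set s.2.1; s.2.2] by rewrite -E !inE eqxx.
  rewrite !inE in vi ui.
  rewrite mem_cat; case/orP: vi => /eqP vE.
  - apply/orP; right; apply/mapP; exists s.2; first by rewrite mem_filter vE eqxx.
    case/orP: ui => /eqP uE //.
    have : s.2.2 \in [set u; v] by rewrite E !inE eqxx orbT.
    by rewrite !inE uE vE orbb => /eqP H; rewrite H eqxx in ab.
  - apply/orP; left; apply/mapP; exists s.2; first by rewrite mem_filter vE eqxx.
    case/orP: ui => /eqP uE //.
    have : s.2.1 \in [set u; v] by rewrite E !inE eqxx.
    by rewrite !inE uE vE orbb => /eqP H; rewrite H eqxx in ab.
apply: (leq_trans (card_size L)).
rewrite size_cat !size_map !size_filter.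
rewrite -[4]/(2 + 2) leq_add //.
  by rewrite -cv (leq_trans (@count_zip2 _ _ x (behead x) v)) // count_behead.
by rewrite -cv (@count_zip1 _ _ x (behead x) v).
Qed.
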